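(* Let $X$ be a finite set with a probability measure $\mu$, let $f\in\Delta_X$, let $\mathcal F_0$ be a finite collection of real-valued functions on $X$, and let $\delta>0$. Consider the dual optimization problem \[ \text{maximize } \; -\log\Big(\mathbb E_\mu \exp\Big(\sum_{\varphi\in\mathcal F_0}\lambda_\varphi\varphi\Big)\Big) + \sum_{\varphi\in\mathcal F_0}\lambda_\varphi\big(\langle f,\varphi\rangle - \delta\big) \quad\text{subject to } \lambda_\varphi\ge 0 \;\;\forall\varphi\in\mathcal F_0. \] If $\{\lambda^*_\varphi\}$ is an optimal solution of this problem, then \[ \sum_{\varphi\in\mathcal F_0}\lambda^*_\varphi \le \frac{\mathrm{Ent}_\mu(f)}{\delta}. \]
   Context: $\langle f,g\rangle = \sum_{x\in X}\mu(x)f(x)g(x)$, $\mathbb E_\mu h = \sum_x\mu(x)h(x)$, $\Delta_X = \{f:X\to[0,\infty) : \mathbb E_\mu f = 1\}$, and $\mathrm{Ent}_\mu(f) = \mathbb E_\mu[f\log f]$ (with $0\log 0=0$). The displayed problem is the Lagrangian dual of the primal problem: minimize $\mathrm{Ent}_\mu(g)$ over $g\in\Delta_X$ subject to $\langle g,\varphi\rangle\ge\langle f,\varphi\rangle-\delta$ for all $\varphi\in\mathcal F_0$. *)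

(* Defs.v *)
From HB Require Import structures.
From mathcomp Require Import all_boot all_order all_algebra.
From mathcomp Require Import finmap.
From mathcomp Require Import all_classical all_reals all_analysis.
Set Implicit Arguments. Unset Strict Implicit. Unset Printing Implicit Defensive.
Import Order.TTheory GRing.Theory Num.Theory.
Local Open Scope ring_scope.
Local Open Scope fset_scope.

Definition is_prob {R : realType} {X : finType} (mu : X -> R) : Prop :=
  (forall x, 0 <= mu x) /\ \sum_(x : X) mu x = 1.

Definition ipr {R : realType} {X : finType} (mu : X -> R) (f g : X -> R) : R :=
  \sum_(x : X) mu x * f x * g x.

Definition Emu {R : realType} {X : finType} (mu : X -> R) (h : X -> R) : R :=
  \sum_(x : X) mu x * h x.

Definition in_Delta {R : realType} {X : finType} (mu : X -> R) (f : X -> R) : Prop :=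
  (forall x, 0 <= f x) /\ Emu mu f = 1.

Definition xlogx {R : realType} (t : R) : R := if t == 0 then 0 else t * ln t.

Definition Ent {R : realType} {X : finType} (mu : X -> R) (f : X -> R) : R :=
  Emu mu (fun x => xlogx (f x)).

Definition dual_obj {R : realType} {X : finType} (mu : X -> R) (f : X -> R)
    (F0 : {fset {ffun X -> R}}) (delta : R) (lam : {ffun X -> R} -> R) : R :=
  - ln (Emu mu (fun x => expR (\sum_(phi <- F0) lam phi * phi x)))
  + \sum_(phi <- F0) lam phi * (ipr mu f phi - delta).

Definition dual_feasible {R : realType} {X : finType}
    (F0 : {fset {ffun X -> R}}) (lam : {ffun X -> R} -> R) : Prop :=
  forall phi, phi \in F0 -> 0 <= lam phi.

Definition dual_optimal {R : realType} {X : finType} (mu : X -> R) (f : X -> R)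
    (F0 : {fset {ffun X -> R}}) (delta : R) (lam : {ffun X -> R} -> R) : Prop :=
  dual_feasible F0 lam /\
  forall lam', dual_feasible F0 lam' ->
    dual_obj mu f F0 delta lam' <= dual_obj mu f F0 delta lam.

(* Main.v *)
Require Import Defs.
From HB Require Import structures.
From mathcomp Require Import all_boot all_order all_algebra.
From mathcomp Require Import finmap.
From mathcomp Require Import all_classical all_reals all_analysis.
From mathcomp Require Import ring lra.
Import Order.TTheory GRing.Theory Num.Theory.
Local Open Scope ring_scope.
Local Open Scope fset_scope.

Lemma ln_le_sub1 (R : realType) (t : R) : 0 < t -> ln t <= t - 1.
Proof.
move=> t0; have := expR_ge1Dx (ln t); rewrite lnK ?posrE //.
by move=> H; rewrite lerBrDl.
Qed.

Lemma pointwise (R : realType) (m fx hx Z : R) : 0 <= m -> 0 <= fx -> 0 < Z ->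
  m * fx * hx - m * xlogx fx - m * fx * ln Z <= m * (expR hx / Z - fx).
Proof.
move=> m0 f0 Z0.
have -> : m * fx * hx - m * xlogx fx - m * fx * ln Z
   = m * (fx * hx - xlogx fx - fx * ln Z) by ring.
apply: ler_wpM2l => //.
rewrite /xlogx; have [fe|fn0] := eqVneq fx 0.
  rewrite fe ?eqxx !mul0r !subr0; apply: divr_ge0; [exact: ltW (expR_gt0 _)|exact: ltW].
have fp : 0 < fx by rewrite lt_neqAle eq_sym fn0.
set a := expR hx / Z.
have ap : 0 < a by rewrite divr_gt0 // expR_gt0.
have lna : ln a = hx - ln Z by rewrite /a ln_div ?posrE ?expR_gt0 // expRK.
have -> : fx * hx - fx * ln fx - fx * ln Z = fx * (ln a - ln fx) by rewrite lna; ring.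
rewrite -ln_div ?posrE //.
have := @ln_le_sub1 _ _ (divr_gt0 ap fp) => H.
apply: le_trans (ler_wpM2l (ltW fp) H) _.
rewrite mulrBr mulr1 mulrCA divff ?mulr1 //.
Qed.

Theorem lemma2p3 (R : realType) (X : finType) (mu : X -> R) (f : X -> R)
    (F0 : {fset {ffun X -> R}}) (delta : R) (lamstar : {ffun X -> R} -> R) :
  is_prob mu -> in_Delta mu f -> 0 < delta ->
  dual_optimal mu f F0 delta lamstar ->
  \sum_(phi <- F0) lamstar phi <= Ent mu f / delta.
Proof.
move=> [mu0 mu1] [f0 f1] d0 [feas opt].
have := opt (fun _ => 0) (fun _ _ => lexx 0).
rewrite /dual_obj.
have -> : \sum_(phi <- F0) (fun=> 0 : R) phi * (ipr mu f phi - delta) = 0.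
  by rewrite big1 // => i _; rewrite mul0r.
have -> : Emu mu (fun x => expR (\sum_(phi <- F0) (fun=> 0 : R) phi * phi x)) = 1.
  rewrite /Emu -[RHS]mu1; apply: eq_bigr => x _.
  by rewrite big1 ?expR0 ?mulr1 // => i _; rewrite mul0r.
rewrite ln1 oppr0 addr0.
set h := fun x => \sum_(phi <- F0) lamstar phi * phi x.
set Z := Emu mu (fun x => expR (h x)).
have Z0 : 0 < Z.
  have [x mx] : exists x, 0 < mu x.
    apply/not_existsP => H.
    have : \sum_(x : X) mu x <= 0.
      by apply: sumr_le0 => x _; rewrite leNgt; apply/negP => /(fun h => H x h).
    by rewrite mu1 ler10.
  rewrite /Z /Emu (bigD1 x) //=.
  apply: ltr_pwDl; first by rewrite mulr_gt0 // expR_gt0.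
  by apply: sumr_ge0 => y _; rewrite mulr_ge0 // ltW // expR_gt0.
have split : \sum_(phi <- F0) lamstar phi * (ipr mu f phi - delta)
   = Emu mu (fun x => f x * h x) - (\sum_(phi <- F0) lamstar phi) * delta.
  under eq_bigr do rewrite mulrBr.
  rewrite sumrB mulr_suml; congr (_ - _).
  rewrite /Emu /h /ipr.
  under [in RHS]eq_bigr do rewrite mulr_sumr mulr_sumr.
  rewrite [in RHS]exchange_big /=; apply: eq_bigr => phi _.
  rewrite mulr_sumr; apply: eq_bigr => x _; ring.
rewrite split => H.
have DV : Emu mu (fun x => f x * h x) - Ent mu f - ln Z <= 0.
  have -> : Emu mu (fun x => f x * h x) - Ent mu f - ln Z
     = \sum_(x : X) (mu x * f x * h x - mu x * xlogx (f x) - mu x * f x * ln Z).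
    rewrite !sumrB /Emu /Ent -mulr_suml.
    have -> : \sum_(x : X) mu x * f x = 1 by rewrite -f1.
    rewrite mul1r; congr (_ - _ - _); apply: eq_bigr => x _; ring.
  apply: le_trans.
    apply: ler_sum => x _; exact: (@pointwise _ _ _ (h x) _ (mu0 x) (f0 x) Z0).
  under eq_bigr do rewrite mulrBr mulrA.
  rewrite sumrB -mulr_suml.
  have -> : \sum_(x : X) mu x * f x = 1 by rewrite -f1.
  rewrite -/(Emu mu (fun x => expR (h x))) -/Z divff ?gt_eqF //.
rewrite ler_pdivlMr //.
lra.
Qed.
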